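(* Let $\varphi\colon\mathcal{A}\to\mathcal{A}^*$ be a substitution of constant length, let $X_\varphi\subset\mathcal{A}^{\mathbf{N}}$ be the one-sided system it generates, and let $\pi\colon X_\varphi\to Y$ be a factor map onto some one-sided subshift $Y$. Then there is a constant $K$ such that $|\pi^{-1}(y)|\leq K$ for every nonperiodic $y\in Y$.
   Context: One-sided setting: $\mathbf{N}=\{0,1,2,\dots\}$, $\varphi$ is growing of constant length $k\ge2$ and acts on $\mathcal{A}^{\mathbf{N}}$ by concatenation; $T$ is the one-sided shift $(Tx)_n=x_{n+1}$. $X_\varphi=\{x\in\mathcal{A}^{\mathbf{N}}:$ every finite factor of $x$ appears in $\varphi^n(a)$ for some $a\in\mathcal{A}$, $n\geq0\}$. A one-sided subshift is a closed $Y\subset\mathcal{B}^{\mathbf{N}}$ with $T(Y)\subset Y$; a factor map is a continuous surjection commuting with the shifts. $y$ is periodic if $T^py=y$ for some $p\geq1$. *)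

(* Defs.v *)
From mathcomp Require Import all_boot.
Set Implicit Arguments. Unset Strict Implicit. Unset Printing Implicit Defensive.

Definition shift (A : Type) (x : nat -> A) : nat -> A := fun n => x n.+1.

Definition subst_word (A : Type) (phi : A -> seq A) (w : seq A) : seq A :=
  flatten (map phi w).

Definition subst_iter (A : Type) (phi : A -> seq A) (n : nat) (a : A) : seq A :=
  iter n (subst_word phi) [:: a].

Definition factor (A : Type) (x : nat -> A) (i n : nat) : seq A :=
  [seq x j | j <- iota i n].

Definition const_length_subst (A : Type) (phi : A -> seq A) (k : nat) : Prop :=
  1 < k /\ forall a, size (phi a) = k.

Definition X_subst (A : eqType) (phi : A -> seq A) (x : nat -> A) : Prop :=
  forall i n, exists (a : A) (m : nat), infix (factor x i n) (subst_iter phi m a).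

(* Closedness in the product topology (A discrete, finite). *)
Definition seq_closed (B : Type) (Y : (nat -> B) -> Prop) : Prop :=
  forall y, (forall n, exists y', Y y' /\ forall i, i < n -> y' i = y i) -> Y y.

Definition subshift (B : Type) (Y : (nat -> B) -> Prop) : Prop :=
  seq_closed Y /\ forall y, Y y -> Y (shift y).

Definition continuous_on (A B : Type) (X : (nat -> A) -> Prop)
    (pi : (nat -> A) -> (nat -> B)) : Prop :=
  forall x, X x -> forall n, exists m, forall x', X x' ->
    (forall i, i < m -> x' i = x i) -> forall i, i < n -> pi x' i = pi x i.

Definition factor_map (A B : Type) (X : (nat -> A) -> Prop)
    (Y : (nat -> B) -> Prop) (pi : (nat -> A) -> (nat -> B)) : Prop :=
  [/\ forall x, X x -> Y (pi x),
      forall y, Y y -> exists x, X x /\ forall n, pi x n = y n,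
      continuous_on X pi
    & forall x, X x -> forall n, pi (shift x) n = shift (pi x) n].

Definition periodic (B : Type) (y : nat -> B) : Prop :=
  exists p, 0 < p /\ forall n, y (n + p) = y n.

(* Main.v *)
Require Import Defs.
From mathcomp Require Import all_boot.
From mathcomp Require Import zify.
From Stdlib Require Import Classical IndefiniteDescription.
Set Implicit Arguments. Unset Strict Implicit. Unset Printing Implicit Defensive.

Lemma choice_fun (T U : Type) (P : T -> U -> Prop) :
  (forall x, exists y, P x y) -> exists g, forall x, P x (g x).
Proof.
move=> H; exists (fun x => proj1_sig (constructive_indefinite_description _ (H x))).
by move=> x; exact: (proj2_sig (constructive_indefinite_description _ (H x))).
Qed.

Section Compact.
Variables (A : finType) (xs : nat -> nat -> A).

Definition Inf (p : seq A) := forall N, exists r, N <= r /\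
  forall i, i < size p -> xs r i = nth (xs 0 0) p i.

Lemma Inf_step p : Inf p -> exists a, Inf (rcons p a).
Proof.
move=> Hp; apply: NNPP => Hn.
have H1 : forall a, exists N, forall r, N <= r ->
    ~ (forall i, i < size (rcons p a) -> xs r i = nth (xs 0 0) (rcons p a) i).
  move=> a; apply: NNPP => Hc; apply: Hn; exists a => N.
  apply: NNPP => Hc2; apply: Hc; exists N => r Hr Hag; apply: Hc2; by exists r.
have [g Hg] := choice_fun H1.
have [r [Hr Hag]] := Hp (\max_(a : A) g a).
apply: (Hg (xs r (size p)) r).
  by apply: leq_trans Hr; apply: (leq_bigmax (xs r (size p))).
move=> i; rewrite size_rcons ltnS leq_eqVlt => /orP [/eqP ->|Hi].
  by rewrite nth_rcons ltnn eqxx.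
by rewrite nth_rcons Hi Hag.
Qed.

Lemma compact : exists z : nat -> A, forall L N, exists r, N <= r /\
  forall i, i < L -> xs r i = z i.
Proof.
have Hs : forall p, exists a, Inf p -> Inf (rcons p a).
  move=> p; case: (classic (Inf p)) => Hp.
    by have [a Ha] := Inf_step Hp; exists a.
  by exists (xs 0 0).
have [st Hst] := choice_fun Hs.
pose pref n := iter n (fun p => rcons p (st p)) [::].
have Hsz : forall n, size (pref n) = n.
  by elim=> [|n IH] //=; rewrite size_rcons IH.
have HI : forall n, Inf (pref n).
  elim=> [|n IH] /=; last exact: Hst.
  by move=> N; exists N; split.
have Hn : forall n i, i < n -> nth (xs 0 0) (pref n) i = nth (xs 0 0) (pref i.+1) i.
  elim=> [|n IH] i //= Hi.
  rewrite nth_rcons Hsz.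
  case: (ltnP i n) => Hin; first by rewrite IH.
  have -> : i = n by apply/eqP; rewrite eqn_leq Hin andbT -ltnS.
  by rewrite eqxx nth_rcons Hsz ltnn eqxx.
exists (fun i => nth (xs 0 0) (pref i.+1) i) => L N.
have [r [Hr Hag]] := HI L N; exists r; split => // i Hi.
by rewrite Hag ?Hsz // Hn.
Qed.
End Compact.

Lemma factor_ext (A : Type) (x x' : nat -> A) i n :
  (forall j, j < i + n -> x j = x' j) -> factor x i n = factor x' i n.
Proof.
move=> H; apply/eq_in_map => j; rewrite mem_iota => /andP [_ Hj]; exact: H.
Qed.

Lemma factor_shift (A : Type) (x : nat -> A) i n :
  factor (shift x) i n = factor x i.+1 n.
Proof. by elim: n i => [|n IH] i //=; have := IH i.+1; rewrite /factor /= => ->. Qed.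

Lemma X_shift (A : eqType) (phi : A -> seq A) x :
  X_subst phi x -> X_subst phi (shift x).
Proof. by move=> H i n; rewrite factor_shift; apply: H. Qed.

Lemma X_iter (A : eqType) (phi : A -> seq A) x t :
  X_subst phi x -> X_subst phi (iter t (@shift A) x).
Proof. by elim: t => [|t IH] //= Hx; apply: X_shift; apply: IH. Qed.

Lemma iter_shiftE (A : Type) (x : nat -> A) t i : iter t (@shift A) x i = x (i + t).
Proof. by elim: t i => [|t IH] i /=; rewrite ?addn0 // /shift IH addnS. Qed.

Lemma window (A : finType) (B : Type) (phi : A -> seq A) (pi : (nat -> A) -> nat -> B) :
  continuous_on (X_subst phi) pi -> exists r, forall x x', X_subst phi x -> X_subst phi x' ->
    (forall i, i < r -> x i = x' i) -> pi x 0 = pi x' 0.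
Proof.
move=> Hc; apply: NNPP => Hn.
have H1 : forall r, exists p : (nat -> A) * (nat -> A), X_subst phi p.1 /\ X_subst phi p.2 /\
   (forall i, i < r -> p.1 i = p.2 i) /\ pi p.1 0 <> pi p.2 0.
  move=> r; apply: NNPP => H2; apply: Hn; exists r => x x' Hx Hx' Hag.
  apply: NNPP => H3; apply: H2; by exists (x, x').
have [g Hg] := choice_fun H1.
have [z Hz] := compact (fun r => (g r).1).
have Xz : X_subst phi z.
  move=> i n; have [r [_ Hr]] := Hz (i + n) 0.
  have -> : factor z i n = factor (g r).1 i n.
    by apply: factor_ext => j Hj; rewrite Hr.
  by case: (Hg r) => H _; apply: H.
have [m Hm] := Hc z Xz 1.
have [r [Hrm Hr]] := Hz m m.
have [X1 [X2 [Hag Hne]]] := Hg r.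
apply: Hne.
rewrite (Hm _ X1 Hr 0 erefl) (Hm _ X2) //.
move=> i Hi; rewrite -Hag ?Hr //; exact: leq_trans Hi Hrm.
Qed.

Lemma pi_iter (A B : Type) (X : (nat -> A) -> Prop) (Y : (nat -> B) -> Prop) pi (x : nat -> A) :
  factor_map X Y pi -> (forall (x : nat -> A) (t : nat), X x -> X (iter t (@shift A) x)) -> X x ->
  forall t n, pi (iter t (@shift A) x) n = pi x (n + t).
Proof.
case=> _ _ _ Hsh HX Hx; elim=> [|t IH] n /=; first by rewrite addn0.
rewrite Hsh; last exact: HX.
by rewrite -[shift _ n]/(pi _ n.+1) IH addnS.
Qed.

Section Subst.
Variables (A : Type) (phi : A -> seq A).

Lemma sw_cat u v : subst_word phi (u ++ v) = subst_word phi u ++ subst_word phi v.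
Proof. by rewrite /subst_word map_cat flatten_cat. Qed.

Lemma iter_cat m u v : iter m (subst_word phi) (u ++ v) =
  iter m (subst_word phi) u ++ iter m (subst_word phi) v.
Proof. by elim: m => [|m IH] //=; rewrite IH sw_cat. Qed.

Lemma iter_flat m w : iter m (subst_word phi) w =
  flatten (map (fun b => iter m (subst_word phi) [:: b]) w).
Proof.
elim: w => [|b w IH] /=; first by elim: m => [|m IH] //=; rewrite IH.
by rewrite -IH -iter_cat.
Qed.

Lemma subst_iterD m m2 a : subst_iter phi (m + m2) a =
  flatten (map (subst_iter phi m) (subst_iter phi m2 a)).
Proof. by rewrite /subst_iter iterD iter_flat. Qed.

Lemma size_sw k w : (forall a, size (phi a) = k) -> size (subst_word phi w) = k * size w.
Proof.
move=> Hs; elim: w => [|b w IH]; first by rewrite muln0.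
by rewrite -cat1s sw_cat size_cat IH /subst_word /= cats0 Hs mulnS.
Qed.

Lemma size_iter k m a : (forall a, size (phi a) = k) -> size (subst_iter phi m a) = k ^ m.
Proof.
move=> Hs; elim: m => [|m IH] //=.
by rewrite /subst_iter /= (size_sw _ Hs) -/(subst_iter phi m a) IH expnS.
Qed.
End Subst.

Lemma nth_flat (A : Type) (x0 : A) (g : A -> seq A) N V q j :
  (forall b, size (g b) = N) -> q < size V -> j < N ->
  nth x0 (flatten (map g V)) (q * N + j) = nth x0 (g (nth x0 V q)) j.
Proof.
move=> Hs; elim: V q => [|b V IH] [|q] //= Hq Hj.
  by rewrite mul0n add0n nth_cat Hs Hj.
rewrite nth_cat Hs ltnNge mulSn -addnA leq_addr /= addKn IH //.
Qed.

Lemma desub (A : finType) (phi : A -> seq A) k (x : nat -> A) m M (a0 : A) :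
  const_length_subst phi k -> X_subst phi x -> 1 < M ->
  exists j (w : nat -> A), j < k ^ m /\ forall t, t < (M - 1) * k ^ m ->
    x t = nth a0 (subst_iter phi m (w ((j + t) %/ k ^ m))) ((j + t) %% k ^ m).
Proof.
move=> [Hk Hsz] Hx HM.
have HN : 0 < k ^ m by rewrite expn_gt0 (ltnW Hk).
set N := k ^ m in HN *; set L := (M - 1) * N.
have [a [m' Hinf]] := Hx 0 L.
case/infixP: Hinf => s1 [s2 HW].
set s := size s1.
have HxW : forall t, t < L -> nth a0 (subst_iter phi m' a) (s + t) = x t.
  move=> t Ht; rewrite HW nth_cat ltnNge leq_addr /= addKn nth_cat size_map size_iota Ht.
  by rewrite (nth_map 0) ?size_iota // nth_iota.
have HsW : s + L <= k ^ m'.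
  by rewrite -(size_iter m' a Hsz) HW !size_cat size_map size_iota addnA leq_addr.
have Hmm : m <= m'.
  rewrite -(leq_exp2l _ _ Hk); apply: leq_trans HsW; apply: leq_trans (leq_addl _ _).
  by rewrite /L leq_pmull // subn_gt0.
move: HW HxW HsW; rewrite -(subnKC Hmm) subst_iterD expnD => HW HxW HsW.
set V := subst_iter phi (m' - m) a in HW HxW HsW.
have HV : size V = k ^ (m' - m) by rewrite (size_iter _ _ Hsz).
exists (s %% N), (fun t => nth a0 V (s %/ N + t)); split; first by rewrite ltn_mod.
move=> t Ht; rewrite -HxW //.
have Hs : s = s %/ N * N + s %% N by apply: divn_eq.
have Hq : (s + t) %/ N < size V.
  by rewrite ltn_divLR // HV mulnC; apply: leq_trans HsW; rewrite ltn_add2l.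
rewrite {1}(divn_eq (s + t) N) nth_flat;
  [ | by move=> b; rewrite (size_iter _ _ Hsz) | exact: Hq | by rewrite ltn_mod].
congr (nth _ (subst_iter _ _ (nth _ _ _)) _).
  by rewrite {1}Hs -addnA divnMDl.
by rewrite {1}Hs -addnA modnMDl.
Qed.

Lemma per_ext (B : Type) (y : nat -> B) p q P Q :
  (forall t, t + q < Q -> y t = y (t + q)) ->
  (forall t, t + p < P -> y t = y (t + p)) -> p + q <= P -> P <= Q -> 0 < q ->
  forall t, t + p < Q -> y t = y (t + p).
Proof.
move=> Hq Hp HPQ1 HPQ2 Hq0 t; elim/ltn_ind: t => t IH Ht.
case: (ltnP (t + p) P) => HtP; first exact: Hp.
have Hqt : q <= t by lia.
have E1 : y (t - q) = y t by rewrite Hq ?subnK //; lia.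
have E2 : y (t - q + p) = y (t + p).
  rewrite Hq; last lia. congr y; lia.
rewrite -E1 -E2 IH //; lia.
Qed.

Unset Implicit Arguments.
Set Strict Implicit.

Theorem lemma4p4 (A B : finType) (phi : A -> seq A) (k : nat)
    (Y : (nat -> B) -> Prop) (pi : (nat -> A) -> (nat -> B)) :
  const_length_subst phi k ->
  subshift Y ->
  factor_map (X_subst phi) Y pi ->
  exists K : nat, forall y, Y y -> ~ periodic y ->
    forall (n : nat) (f : 'I_n -> (nat -> A)),
      (forall i j, i != j -> exists m, f i m <> f j m) ->
      (forall j, X_subst phi (f j) /\ forall m, pi (f j) m = y m) ->
      n <= K.
Proof.
move=> Hphi _ Hfm; have [_ _ Hcont _] := Hfm.
have Hk := Hphi.1.
have [r Hr] := window Hcont.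
set M := k.+3.
exists (#|A| ^ M).
move=> y Yy Hnp n f Hdist Hfib.
rewrite leqNgt; apply/negP => Hn.
have HD0 : forall pr : 'I_n * 'I_n, exists t, pr.1 != pr.2 -> f pr.1 t <> f pr.2 t.
  move=> [i i'] /=; case: (eqVneq i i') => [->|Hne]; first by exists 0 => /eqP.
  by have [t Ht] := Hdist _ _ Hne; exists t.
have [g Hg] := choice_fun HD0.
set D := \max_(pr : 'I_n * 'I_n) (g pr).+1.
have HgD : forall pr, g pr < D by move=> pr; exact: (leq_bigmax pr).
have HXit : forall (x : nat -> A) (t : nat), X_subst phi x -> X_subst phi (iter t (@shift A) x).
  by move=> x t H; apply: X_iter.
have Hloc : forall x x' t, X_subst phi x -> X_subst phi x' ->
    (forall i, t <= i -> i < t + r -> x i = x' i) -> pi x t = pi x' t.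
  move=> x x' t Hx Hx' H.
  rewrite -(add0n t) -(pi_iter Hfm HXit Hx) -(pi_iter Hfm HXit Hx').
  apply: Hr; try exact: HXit.
  by move=> i Hi; rewrite !iter_shiftE; apply: H; lia.
have Hn0 : 0 < n := leq_ltn_trans (leq0n _) Hn.
set i0 : 'I_n := Ordinal Hn0.
set a0 := f i0 0.
have Hlev : forall m, D + r <= m -> exists d, 0 < d < k ^ m /\
    forall t, t + d < k.+1 * k ^ m -> y t = y (t + d).
  move=> m Hm.
  have HNr : D + r < k ^ m := leq_ltn_trans Hm (ltn_expl m Hk).
  set N := k ^ m in HNr *.
  have H1 : forall i, exists p : nat * (nat -> A), p.1 < N /\ forall t, t < (M - 1) * N ->
      f i t = nth a0 (subst_iter phi m (p.2 ((p.1 + t) %/ N))) ((p.1 + t) %% N).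
    move=> i; have [j [w Hjw]] := desub m a0 Hphi (Hfib i).1 (isT : 1 < M).
    by exists (j, w).
  have [h Hh] := choice_fun H1.
  have key : forall i i', i != i' -> (forall u, u < M -> (h i).2 u = (h i').2 u) ->
      (h i).1 <= (h i').1 -> exists d, 0 < d < N /\
      forall t, t + d < k.+1 * N -> y t = y (t + d).
    move=> i i' Hne Hw Hle.
    have [Hj1 Hx1] := Hh i; have [Hj2 Hx2] := Hh i'.
    have HM1 : M - 1 = k.+2 by rewrite /M subn1.
    rewrite HM1 in Hx1 Hx2.
    have Hshift : forall s, s + ((h i').1 - (h i).1) < k.+2 * N ->
        f i' s = f i (s + ((h i').1 - (h i).1)).
      move=> s Hs; rewrite Hx1 ?Hx2; [|lia|lia].
      have -> : (h i).1 + (s + ((h i').1 - (h i).1)) = (h i').1 + s by lia.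
      rewrite Hw //; rewrite ltn_divLR; last lia.
      rewrite /M mulSn; lia.
    case: (ltngtP (h i).1 (h i').1) Hle => // [Hlt _|Heq _].
      exists ((h i').1 - (h i).1); split; first by apply/andP; split; lia.
      move=> t Ht.
      have [Hf1 Hy1] := Hfib i; have [Hf2 Hy2] := Hfib i'.
      rewrite -Hy2 -Hy1 -(pi_iter Hfm HXit Hf1).

      apply: Hloc => //; first exact: HXit.
      move=> s Hs1 Hs2; rewrite iter_shiftE Hshift //.
      rewrite mulSn; lia.
    exfalso; apply: (Hg (i, i') Hne) => /=.
    have Hgi := HgD (i, i').
    have Hgl : g (i, i') < k.+2 * N by rewrite mulSn; lia.
    by rewrite (Hshift _) ?Heq ?subnn ?addn0 // -Heq subnn addn0.
  have : ~~ injectiveb (fun i => [ffun u : 'I_M => (h i).2 u]).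
    apply/negP => /injectiveP Hinj; have := leq_card _ Hinj.
    by rewrite card_ffun !card_ord leqNgt Hn.
  case/injectivePn => i [i' Hne HT].
  have Hw : forall u, u < M -> (h i).2 u = (h i').2 u.
    move=> u Hu; have := congr1 (fun F : {ffun 'I_M -> A} => F (Ordinal Hu)) HT; rewrite !ffunE => H; exact: H.
  case: (leqP (h i).1 (h i').1) => Hle; first exact: (key _ _ Hne Hw Hle).
  apply: (key i' i); first by rewrite eq_sym.
    by move=> u Hu; rewrite Hw.
  exact: ltnW.
have [d0 [Hd0 Hp0]] := Hlev (D + r) (leqnn _).
set m0 := D + r in Hd0 Hp0.
have Hall : forall m, m0 <= m -> forall t, t + d0 < k.+1 * k ^ m -> y t = y (t + d0).
  elim=> [|m IH] Hm.
    by move: Hm; rewrite leqn0 => /eqP H; rewrite -H in Hp0 *.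
  case: (eqVneq m0 m.+1) => [<- //|Hne].
  have Hm' : m0 <= m by move: Hm; rewrite leq_eqVlt (negPf Hne).
  have [q [Hq Hpq]] := Hlev m.+1 (leq_trans Hm' (leqnSn m)).
  have Hkm : k ^ m0 <= k ^ m by apply: leq_pexp2l => //; lia.
  move: Hq Hpq; rewrite expnS => Hq Hpq.
  apply: (per_ext Hpq (IH Hm')).
  - by nia.
  - by rewrite leq_mul2l; apply/orP; right; rewrite leq_pmull //; lia.
  - by lia.
have [Hdp Hdk] : 0 < d0 /\ d0 < k ^ m0 by apply/andP.
apply: Hnp; exists d0; split => // t.
symmetry; apply: (Hall (m0 + t + d0)); first by rewrite -addnA leq_addr.
have := ltn_expl (m0 + t + d0) Hk.
have : k ^ (m0 + t + d0) <= k.+1 * k ^ (m0 + t + d0) by rewrite leq_pmull.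
lia.
Qed.
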